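(* Let $M$ be a constant symmetric positive definite symplectic $2n\times 2n$ matrix and let $\Gamma_M=\phi_M^{-(Q-2)/4}$. Then $\mathcal L_M\Gamma_M(z)=0$ for all $z\in\mathbb R^{2n+1}\setminus\{0\}$.
   Context: Points of $\mathbb R^{2n+1}$ are written $(x,t)$, $x\in\mathbb R^{2n}$, $t\in\mathbb R$. $J=\begin{pmatrix}0&-\mathbb I_n\\ \mathbb I_n&0\end{pmatrix}$, $Q=2n+2$; $M$ symplectic means $M^{-1}=J^tMJ$. $X_i=\partial_{x_i}+2(Jx)_i\partial_t$ ($i=1,\dots,2n$), $D^2_{\mathbb H}\psi=\big(\tfrac12(X_iX_j+X_jX_i)\psi\big)_{i,j}$, $\mathcal L_M\psi=\mathrm{tr}(MD^2_{\mathbb H}\psi)$, and $\phi_M(x,t)=\langle M^{-1}x,x\rangle^2+t^2$. *)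

(* Defs.v *)
From Stdlib Require Import Reals Lra Lia List Arith ClassicalEpsilon.
Import ListNotations.
Open Scope R_scope.

(* Points of R^{2n+1} are functions z : nat -> R; coordinates 0..2n-1 are x,
   coordinate 2n is t. Coordinates >= 2n+1 are ignored.
   Matrices of size 2n x 2n are functions nat -> nat -> R, entries i,j < 2n. *)

Definition rsum (N : nat) (f : nat -> R) : R :=
  fold_right Rplus 0 (map f (seq 0 N)).

Definition upd (z : nat -> R) (k : nat) (s : R) : nat -> R :=
  fun j => if Nat.eqb j k then s else z j.

Definition has_pderiv (f : (nat -> R) -> R) (k : nat) (z : nat -> R) (l : R) : Prop :=
  derivable_pt_lim (fun s => f (upd z k s)) (z k) l.

Definition pdiff_at (f : (nat -> R) -> R) (k : nat) (z : nat -> R) : Prop :=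
  exists l, has_pderiv f k z l.

(* the partial derivative (its value when it exists, 0 otherwise) *)
Definition pd (f : (nat -> R) -> R) (k : nat) (z : nat -> R) : R :=
  match excluded_middle_informative (pdiff_at f k z) with
  | left H => proj1_sig (constructive_indefinite_description _ H)
  | right _ => 0
  end.

(* J = [[0, -I_n],[I_n, 0]] *)
Definition Jmat (n : nat) (i j : nat) : R :=
  if (Nat.ltb i n && Nat.leb n j && Nat.eqb j (i + n))%bool then -1
  else if (Nat.leb n i && Nat.ltb j n && Nat.eqb i (j + n))%bool then 1
  else 0.

Definition trmat (A : nat -> nat -> R) : nat -> nat -> R := fun i j => A j i.

Definition matmul (n : nat) (A B : nat -> nat -> R) : nat -> nat -> R :=
  fun i j => rsum (2 * n) (fun k => A i k * B k j).

Definition idmat (i j : nat) : R := if Nat.eqb i j then 1 else 0.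

Definition Jx (n : nat) (z : nat -> R) (i : nat) : R :=
  rsum (2 * n) (fun j => Jmat n i j * z j).

Definition Xop (n : nat) (i : nat) (f : (nat -> R) -> R) : (nat -> R) -> R :=
  fun z => pd f i z + 2 * Jx n z i * pd f (2 * n) z.

Definition D2H (n : nat) (i j : nat) (f : (nat -> R) -> R) : (nat -> R) -> R :=
  fun z => / 2 * (Xop n i (Xop n j f) z + Xop n j (Xop n i f) z).

Definition LM (n : nat) (M : nat -> nat -> R) (f : (nat -> R) -> R) : (nat -> R) -> R :=
  fun z => rsum (2 * n) (fun i => rsum (2 * n) (fun j => M i j * D2H n j i f z)).

Definition quad (n : nat) (A : nat -> nat -> R) (z : nat -> R) : R :=
  rsum (2 * n) (fun i => rsum (2 * n) (fun j => A i j * z j) * z i).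

(* phi_M(x,t) = <M^{-1} x, x>^2 + t^2, given Minv = M^{-1} *)
Definition phiM (n : nat) (Minv : nat -> nat -> R) (z : nat -> R) : R :=
  (quad n Minv z) ^ 2 + (z (2 * n)%nat) ^ 2.

Definition Qdim (n : nat) : R := INR (2 * n + 2).

Definition GammaM (n : nat) (Minv : nat -> nat -> R) (z : nat -> R) : R :=
  Rpower (phiM n Minv z) (- (Qdim n - 2) / 4).

Definition sym_mat (n : nat) (M : nat -> nat -> R) : Prop :=
  forall i j, (i < 2 * n)%nat -> (j < 2 * n)%nat -> M i j = M j i.

Definition posdef_mat (n : nat) (M : nat -> nat -> R) : Prop :=
  forall v : nat -> R, (exists i, (i < 2 * n)%nat /\ v i <> 0) ->
    0 < rsum (2 * n) (fun i => rsum (2 * n) (fun j => M i j * v j) * v i).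

Definition is_inverse (n : nat) (M Minv : nat -> nat -> R) : Prop :=
  forall i j, (i < 2 * n)%nat -> (j < 2 * n)%nat ->
    matmul n M Minv i j = idmat i j /\ matmul n Minv M i j = idmat i j.

Definition symplectic (n : nat) (M Minv : nat -> nat -> R) : Prop :=
  is_inverse n M Minv /\
  forall i j, (i < 2 * n)%nat -> (j < 2 * n)%nat ->
    Minv i j = matmul n (trmat (Jmat n)) (matmul n M (Jmat n)) i j.

Definition nonzero_pt (n : nat) (z : nat -> R) : Prop :=
  exists k, (k <= 2 * n)%nat /\ z k <> 0.

(* Main.v *)
Require Import Defs.
From Stdlib Require Import Reals Lra Lia List Arith FunctionalExtensionality ClassicalEpsilon.
Import ListNotations.
Open Scope R_scope.

Lemma fold_app_R (l : list nat) (f : nat -> R) x :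
  fold_right Rplus 0 (map f (l ++ [x])) = fold_right Rplus 0 (map f l) + f x.
Proof. induction l; simpl; [ring | rewrite IHl; ring]. Qed.

Lemma rsum_S N f : rsum (S N) f = rsum N f + f N.
Proof. unfold rsum. rewrite seq_S. rewrite fold_app_R. simpl. ring. Qed.

Lemma rsum_0 f : rsum 0 f = 0.
Proof. reflexivity. Qed.

Lemma rsum_ext N f g : (forall i, (i < N)%nat -> f i = g i) -> rsum N f = rsum N g.
Proof. induction N; intros H; [reflexivity|]. rewrite !rsum_S, IHN, H; auto. Qed.

Lemma rsum_plus N f g : rsum N (fun i => f i + g i) = rsum N f + rsum N g.
Proof. induction N; [simpl; unfold rsum; simpl; ring|]. rewrite !rsum_S, IHN. ring. Qed.

Lemma rsum_scal N c f : rsum N (fun i => c * f i) = c * rsum N f.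
Proof. induction N; [unfold rsum; simpl; ring|]. rewrite !rsum_S, IHN. ring. Qed.

Lemma rsum_zero N : rsum N (fun _ => 0) = 0.
Proof. induction N; [reflexivity|]. rewrite rsum_S, IHN. ring. Qed.

Lemma rsum_one N : rsum N (fun _ => 1) = INR N.
Proof. induction N; [reflexivity|]. rewrite rsum_S, IHN, S_INR. ring. Qed.

Lemma rsum_swap N1 N2 f :
  rsum N1 (fun i => rsum N2 (fun j => f i j)) = rsum N2 (fun j => rsum N1 (fun i => f i j)).
Proof.
  induction N1.
  - rewrite rsum_0. symmetry. apply rsum_zero.
  - rewrite rsum_S, IHN1, <- rsum_plus. apply rsum_ext. intros. rewrite rsum_S. reflexivity.
Qed.

Lemma rsum_delta N c k :
  rsum N (fun j => c j * (if Nat.eqb j k then 1 else 0)) = if Nat.ltb k N then c k else 0.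
Proof.
  induction N; [reflexivity|]. rewrite rsum_S, IHN.
  destruct (Nat.eqb_spec N k), (Nat.ltb_spec k N), (Nat.ltb_spec k (S N)); try lia; subst; ring.
Qed.

Lemma rsum_delta' N c k :
  rsum N (fun j => (if Nat.eqb k j then 1 else 0) * c j) = if Nat.ltb k N then c k else 0.
Proof.
  rewrite <- rsum_delta. apply rsum_ext. intros. rewrite Nat.eqb_sym. ring.
Qed.

Lemma rsum_mul_swap N c d y :
  rsum N (fun i => c i * rsum N (fun j => d i j * y j)) =
  rsum N (fun j => rsum N (fun i => c i * d i j) * y j).
Proof.
  transitivity (rsum N (fun i => rsum N (fun j => c i * d i j * y j))).
  { apply rsum_ext; intros. rewrite <- rsum_scal. apply rsum_ext; intros; ring. }
  rewrite rsum_swap. apply rsum_ext; intros.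
  rewrite Rmult_comm, <- rsum_scal. apply rsum_ext; intros; ring.
Qed.

Lemma upd_same z k : upd z k (z k) = z.
Proof. apply functional_extensionality. intro j. unfold upd. destruct (Nat.eqb_spec j k); subst; auto. Qed.

Lemma hp_eq f k z l l' : has_pderiv f k z l -> l = l' -> has_pderiv f k z l'.
Proof. intros H ->; exact H. Qed.

Lemma hp_ext f g k z l : (forall z, f z = g z) -> has_pderiv g k z l -> has_pderiv f k z l.
Proof. intros H. replace f with g; auto. apply functional_extensionality; auto. Qed.

Lemma hp_const c k z : has_pderiv (fun _ => c) k z 0.
Proof. apply derivable_pt_lim_const. Qed.

Lemma hp_coord m k z : has_pderiv (fun z => z m) k z (if Nat.eqb m k then 1 else 0).
Proof.
  unfold has_pderiv, upd. destruct (Nat.eqb_spec m k).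
  - apply derivable_pt_lim_id.
  - apply derivable_pt_lim_const.
Qed.

Lemma hp_plus f g k z l1 l2 : has_pderiv f k z l1 -> has_pderiv g k z l2 ->
  has_pderiv (fun z => f z + g z) k z (l1 + l2).
Proof. intros H1 H2. exact (derivable_pt_lim_plus _ _ _ _ _ H1 H2). Qed.

Lemma hp_mult f g k z l1 l2 : has_pderiv f k z l1 -> has_pderiv g k z l2 ->
  has_pderiv (fun z => f z * g z) k z (l1 * g z + f z * l2).
Proof. intros H1 H2. pose proof (derivable_pt_lim_mult _ _ _ _ _ H1 H2) as H.
  cbv beta in H. rewrite upd_same in H. exact H. Qed.

Lemma hp_Rpower f k z l c : 0 < f z -> has_pderiv f k z l ->
  has_pderiv (fun z => Rpower (f z) c) k z (c * Rpower (f z) (c - 1) * l).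
Proof. intros Hp H1.
  assert (H2 := derivable_pt_lim_power (f z) c Hp).
  unfold has_pderiv in *. rewrite <- (upd_same z k) in H2 at 1.
  pose proof (derivable_pt_lim_comp _ _ _ _ _ H1 H2) as H. exact H. Qed.

Lemma hp_rsum N g k z l : (forall i, (i < N)%nat -> has_pderiv (g i) k z (l i)) ->
  has_pderiv (fun z => rsum N (fun i => g i z)) k z (rsum N l).
Proof.
  induction N; intro H.
  - eapply hp_ext. { intro w. apply rsum_0. } exact (hp_const 0 k z).
  - eapply hp_ext. { intro w. apply rsum_S. }
    rewrite rsum_S. apply hp_plus; auto.
Qed.

Lemma hp_lin n (B : nat -> nat -> R) m k z :
  has_pderiv (fun z => rsum (2*n) (fun j => B m j * z j)) k z
    (if Nat.ltb k (2*n) then B m k else 0).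
Proof.
  eapply hp_eq. { apply hp_rsum. intros i _. apply hp_mult. apply hp_const. apply hp_coord. }
  rewrite <- rsum_delta. apply rsum_ext. intros. ring.
Qed.

Lemma hp_sq f k z l : has_pderiv f k z l -> has_pderiv (fun z => f z ^ 2) k z (2 * f z * l).
Proof. intros H. eapply hp_ext. { intro w. simpl. reflexivity. }
  eapply hp_eq. apply hp_mult. exact H. apply hp_mult. exact H. apply hp_const. simpl; ring. Qed.

Lemma deriv_local f g x l : (exists d, 0 < d /\ forall y, Rabs (y - x) < d -> f y = g y) ->
  derivable_pt_lim g x l -> derivable_pt_lim f x l.
Proof.
  intros [d [Hd Hfg]] Hg eps Heps.
  destruct (Hg eps Heps) as [del Hdel].
  assert (Hm : 0 < Rmin d del) by (apply Rmin_pos; [lra | apply cond_pos]).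
  exists (mkposreal _ Hm). intros h Hh0 Hh. simpl in Hh.
  rewrite (Hfg (x + h)), (Hfg x).
  - apply Hdel; auto. apply Rlt_le_trans with (1 := Hh). apply Rmin_r.
  - rewrite Rminus_diag, Rabs_R0. lra.
  - replace (x + h - x) with h by ring. apply Rlt_le_trans with (1 := Hh). apply Rmin_l.
Qed.

Lemma nz_nbhd n z k : nonzero_pt n z ->
  exists d, 0 < d /\ forall s, Rabs (s - z k) < d -> nonzero_pt n (upd z k s).
Proof.
  intros [m [Hm Hz]]. destruct (Nat.eqb_spec m k).
  - subst. exists (Rabs (z k)). split. apply Rabs_pos_lt; auto.
    intros s Hs. exists k. split; auto. unfold upd. rewrite Nat.eqb_refl.
    intro E. subst. rewrite Rminus_0_l, Rabs_Ropp in Hs. lra.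
  - exists 1. split. lra. intros s _. exists m. split; auto. unfold upd.
    destruct (Nat.eqb_spec m k); [contradiction | auto].
Qed.

Lemma hp_local n f g k z l : nonzero_pt n z ->
  (forall w, nonzero_pt n w -> f w = g w) -> has_pderiv g k z l -> has_pderiv f k z l.
Proof.
  intros Hz Hfg Hg. unfold has_pderiv in *. eapply deriv_local; [|exact Hg].
  destruct (nz_nbhd n z k Hz) as [d [Hd H]]. exists d. split; auto.
Qed.

Lemma pd_eq f k z l : has_pderiv f k z l -> pd f k z = l.
Proof.
  intros H. unfold pd. destruct (excluded_middle_informative (pdiff_at f k z)) as [H'|H'].
  - destruct (constructive_indefinite_description _ H') as [l' Hl']. simpl.
    eapply uniqueness_limite; eauto.
  - exfalso. apply H'. exists l; auto.
Qed.

Definition av n (A : nat -> nat -> R) z m := rsum (2*n) (fun j => A m j * z j).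
Definition dq n A k z := if Nat.ltb k (2*n) then 2 * av n A z k else 0.
Definition dt n k := if Nat.eqb k (2*n) then 1 else 0.
Definition dph n A k z := 2 * quad n A z * dq n A k z + 2 * z (2*n)%nat * dt n k.
Definition pex n := - (Qdim n - 2) / 4.
Definition FF n A k z := pex n * Rpower (phiM n A z) (pex n - 1) * dph n A k z.
Definition EE n A i z := pex n * Rpower (phiM n A z) (pex n - 1) *
   (4 * (quad n A z * av n A z i + Jx n z i * z (2*n)%nat)).
Definition DE n A i j z :=
  pex n * ((pex n - 1) * Rpower (phiM n A z) (pex n - 1 - 1) * dph n A j z) *
     (4 * (quad n A z * av n A z i + Jx n z i * z (2*n)%nat)) +
  pex n * Rpower (phiM n A z) (pex n - 1) *
     (4 * (dq n A j z * av n A z i + quad n A z * (if Nat.ltb j (2*n) then A i j else 0) +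
          ((if Nat.ltb j (2*n) then Jmat n i j else 0) * z (2*n)%nat + Jx n z i * dt n j))).

Definition symA n (A : nat -> nat -> R) := forall i j, (i < 2*n)%nat -> (j < 2*n)%nat -> A i j = A j i.

Lemma hp_av n A m k z : has_pderiv (fun z => av n A z m) k z (if Nat.ltb k (2*n) then A m k else 0).
Proof. apply hp_lin. Qed.

Lemma hp_Jx n m k z : has_pderiv (fun z => Jx n z m) k z (if Nat.ltb k (2*n) then Jmat n m k else 0).
Proof. apply hp_lin. Qed.

Lemma hp_quad n A k z : symA n A -> has_pderiv (quad n A) k z (dq n A k z).
Proof.
  intros HA. change (quad n A) with (fun z => rsum (2*n) (fun i => av n A z i * z i)).
  eapply hp_eq. { apply hp_rsum. intros i _. apply hp_mult. apply hp_av. apply hp_coord. }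
  rewrite rsum_plus. rewrite rsum_delta. unfold dq.
  destruct (Nat.ltb_spec k (2*n)).
  - unfold av at 2. rewrite (rsum_ext _ _ (fun i => A k i * z i)).
    + fold (av n A z k). ring.
    + intros. rewrite HA; auto.
  - rewrite (rsum_ext _ _ (fun _ => 0)); [rewrite rsum_zero; ring | intros; ring].
Qed.

Lemma hp_t n k z : has_pderiv (fun z => z (2*n)%nat) k z (dt n k).
Proof. unfold dt. eapply hp_eq. apply hp_coord. rewrite Nat.eqb_sym. reflexivity. Qed.

Lemma hp_phi n A k z : symA n A -> has_pderiv (phiM n A) k z (dph n A k z).
Proof.
  intros HA. unfold phiM. eapply hp_eq. apply hp_plus; apply hp_sq. apply hp_quad; auto. apply hp_t.
  unfold dph. ring.
Qed.

Lemma hp_Gamma n A k z : symA n A -> 0 < phiM n A z -> has_pderiv (GammaM n A) k z (FF n A k z).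
Proof.
  intros HA Hp. unfold GammaM. eapply hp_eq. apply hp_Rpower; auto. apply hp_phi; auto.
  unfold FF, pex. ring.
Qed.

Lemma hp_R1 n A k z c : symA n A -> 0 < phiM n A z ->
  has_pderiv (fun z => Rpower (phiM n A z) c) k z (c * Rpower (phiM n A z) (c - 1) * dph n A k z).
Proof. intros HA Hp. apply hp_Rpower; auto. apply hp_phi; auto. Qed.

Lemma hp_E n A i j z : symA n A -> 0 < phiM n A z -> has_pderiv (EE n A i) j z (DE n A i j z).
Proof.
  intros HA Hp. unfold EE.
  eapply hp_eq.
  { apply hp_mult. apply hp_mult. apply hp_const. apply hp_R1; auto.
    apply hp_mult. apply hp_const. apply hp_plus; apply hp_mult.
    apply hp_quad; auto. apply hp_av. apply hp_Jx. apply hp_t. }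
  unfold DE. ring.
Qed.

Lemma J_antisym n i j : Jmat n i j = - Jmat n j i.
Proof.
  unfold Jmat.
  destruct (Nat.ltb_spec i n), (Nat.leb_spec n j), (Nat.eqb_spec j (i+n)),
           (Nat.leb_spec n i), (Nat.ltb_spec j n), (Nat.eqb_spec i (j+n));
  destruct (Nat.ltb_spec j n), (Nat.leb_spec n i), (Nat.eqb_spec i (j+n)),
           (Nat.leb_spec n j), (Nat.ltb_spec i n), (Nat.eqb_spec j (i+n));
  simpl; try lia; ring.
Qed.

Lemma J_low n m j : (m < n)%nat -> Jmat n m j = -1 * (if Nat.eqb j (m+n) then 1 else 0).
Proof.
  intros H. unfold Jmat.
  destruct (Nat.ltb_spec m n), (Nat.leb_spec n j), (Nat.eqb_spec j (m+n)),
           (Nat.leb_spec n m); simpl; try lia; ring.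
Qed.

Lemma J_high n m j : (n <= m < 2*n)%nat -> Jmat n m j = 1 * (if Nat.eqb j (m-n) then 1 else 0).
Proof.
  intros H. unfold Jmat.
  destruct (Nat.ltb_spec m n), (Nat.leb_spec n m), (Nat.ltb_spec j n), (Nat.eqb_spec m (j+n)),
     (Nat.eqb_spec j (m-n)); simpl; try lia; ring.
Qed.

Lemma Jx_low n z m : (m < n)%nat -> Jx n z m = - z (m+n)%nat.
Proof.
  intros H. unfold Jx. rewrite (rsum_ext _ _ (fun j => (-1 * z j) * (if Nat.eqb j (m+n) then 1 else 0))).
  - rewrite rsum_delta. destruct (Nat.ltb_spec (m+n) (2*n)); [ring | lia].
  - intros. rewrite J_low; auto. ring.
Qed.

Lemma Jx_high n z m : (n <= m < 2*n)%nat -> Jx n z m = z (m-n)%nat.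
Proof.
  intros H. unfold Jx. rewrite (rsum_ext _ _ (fun j => (1 * z j) * (if Nat.eqb j (m-n) then 1 else 0))).
  - rewrite rsum_delta. destruct (Nat.ltb_spec (m-n) (2*n)); [ring | lia].
  - intros. rewrite J_high; [ring | lia].
Qed.

Lemma xJx n z : rsum (2*n) (fun i => Jx n z i * z i) = 0.
Proof.
  assert (E1 : rsum (2*n) (fun i => Jx n z i * z i) = rsum (2*n) (fun i => rsum (2*n) (fun k => Jmat n i k * z k * z i))).
  { apply rsum_ext. intros. unfold Jx. rewrite Rmult_comm, <- rsum_scal.
    apply rsum_ext; intros; ring. }
  assert (E2 : rsum (2*n) (fun i => rsum (2*n) (fun k => Jmat n i k * z k * z i)) =
     -1 * rsum (2*n) (fun i => rsum (2*n) (fun k => Jmat n i k * z k * z i))).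
  { rewrite rsum_swap at 1. rewrite <- rsum_scal. apply rsum_ext; intros. rewrite <- rsum_scal.
    apply rsum_ext; intros. rewrite J_antisym. ring. }
  rewrite E1. lra.
Qed.

Lemma A_formula n M A i j : symplectic n M A -> (i < 2*n)%nat -> (j < 2*n)%nat ->
  A i j = rsum (2*n) (fun k => rsum (2*n) (fun l => Jmat n k i * M k l * Jmat n l j)).
Proof.
  intros [_ H] Hi Hj. rewrite H; auto. unfold matmul, trmat. apply rsum_ext; intros.
  rewrite <- rsum_scal. apply rsum_ext; intros. ring.
Qed.

Lemma A_sym n M A : sym_mat n M -> symplectic n M A -> symA n A.
Proof.
  intros HM HA i j Hi Hj. rewrite !(A_formula n M A); auto.
  rewrite (rsum_swap (2*n) (2*n) (fun k l => Jmat n k j * M k l * Jmat n l i)).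
  apply rsum_ext; intros. apply rsum_ext; intros. rewrite (HM i0 i1); auto. ring.
Qed.

Lemma Ma n M A z i : symplectic n M A -> (i < 2*n)%nat ->
  rsum (2*n) (fun j => M i j * av n A z j) = z i.
Proof.
  intros [HI _] Hi. unfold av. rewrite rsum_mul_swap.
  rewrite (rsum_ext _ _ (fun k => (if Nat.eqb i k then 1 else 0) * z k)).
  - rewrite rsum_delta'. destruct (Nat.ltb_spec i (2*n)); [reflexivity | lia].
  - intros k Hk. destruct (HI i k Hi Hk) as [E _]. unfold matmul in E. rewrite E. reflexivity.
Qed.

Lemma S1 n M A z : symplectic n M A ->
  rsum (2*n) (fun i => rsum (2*n) (fun j => M i j * av n A z i * av n A z j)) = quad n A z.
Proof.
  intros H. unfold quad. apply rsum_ext. intros i Hi.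
  transitivity (av n A z i * rsum (2*n) (fun j => M i j * av n A z j)).
  - rewrite <- rsum_scal. apply rsum_ext; intros; ring.
  - rewrite Ma; auto.
Qed.

Lemma S4a n M A z : symplectic n M A ->
  rsum (2*n) (fun i => rsum (2*n) (fun j => M i j * Jx n z i * av n A z j)) = 0.
Proof.
  intros H. rewrite <- (xJx n z). apply rsum_ext. intros i Hi.
  transitivity (Jx n z i * rsum (2*n) (fun j => M i j * av n A z j)).
  - rewrite <- rsum_scal. apply rsum_ext; intros; ring.
  - rewrite Ma; auto.
Qed.

Lemma S4b n M A z : sym_mat n M -> symplectic n M A ->
  rsum (2*n) (fun i => rsum (2*n) (fun j => M i j * av n A z i * Jx n z j)) = 0.
Proof.
  intros HM H. rewrite rsum_swap. rewrite <- (S4a n M A z H). apply rsum_ext; intros.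
  apply rsum_ext; intros. rewrite HM; auto. ring.
Qed.

Lemma S2 n M A : symplectic n M A -> symA n A ->
  rsum (2*n) (fun i => rsum (2*n) (fun j => M i j * A i j)) = INR (2*n).
Proof.
  intros [HI _] HA. rewrite <- rsum_one. apply rsum_ext. intros i Hi.
  destruct (HI i i Hi Hi) as [E _]. unfold matmul, idmat in E. rewrite Nat.eqb_refl in E.
  rewrite <- E. apply rsum_ext; intros. rewrite (HA i i0); auto.
Qed.

Lemma S3 n M A z : symplectic n M A ->
  rsum (2*n) (fun i => rsum (2*n) (fun j => M i j * Jx n z i * Jx n z j)) = quad n A z.
Proof.
  intros H.
  transitivity (rsum (2*n) (fun i => rsum (2*n) (fun l => matmul n M (Jmat n) i l * z l) * Jx n z i)).
  { apply rsum_ext; intros i Hi.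
    transitivity (Jx n z i * rsum (2*n) (fun j => M i j * Jx n z j)).
    - rewrite <- rsum_scal. apply rsum_ext; intros; ring.
    - unfold Jx at 2. rewrite rsum_mul_swap. rewrite Rmult_comm. reflexivity. }
  unfold Jx. rewrite rsum_mul_swap. unfold quad. apply rsum_ext. intros k Hk. f_equal.
  rewrite (rsum_ext _ _ (fun i => Jmat n i k * rsum (2*n) (fun l => matmul n M (Jmat n) i l * z l))).
  2:{ intros; ring. }
  rewrite rsum_mul_swap. apply rsum_ext. intros l Hl. f_equal.
  destruct H as [_ H]. rewrite H; auto.
Qed.

Lemma quad_pos n M A z : posdef_mat n M -> symplectic n M A ->
  (exists k, (k < 2*n)%nat /\ z k <> 0) -> 0 < quad n A z.
Proof.
  intros HP H [k [Hk Hz]]. rewrite <- (S3 n M A z H).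
  rewrite (rsum_ext _ _ (fun i => rsum (2*n) (fun j => M i j * Jx n z j) * Jx n z i)).
  2:{ intros. rewrite Rmult_comm, <- rsum_scal. apply rsum_ext; intros; ring. }
  apply HP. destruct (Nat.ltb_spec k n).
  - exists (k+n)%nat. split. lia. rewrite Jx_high by lia. replace (k+n-n)%nat with k by lia. auto.
  - exists (k-n)%nat. split. lia. rewrite Jx_low by lia. replace (k-n+n)%nat with k by lia. intro E; apply Hz; lra.
Qed.

Lemma phi_pos n M A z : posdef_mat n M -> symplectic n M A -> nonzero_pt n z -> 0 < phiM n A z.
Proof.
  intros HP H [k [Hk Hz]]. unfold phiM.
  destruct (Nat.eq_dec k (2*n)).
  - subst. assert (0 < z (2*n)%nat ^ 2) by (simpl; rewrite Rmult_1_r; apply Rsqr_pos_lt; auto).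
    assert (0 <= quad n A z ^ 2) by (simpl; rewrite Rmult_1_r; apply Rle_0_sqr). lra.
  - assert (Hk' : (k < 2*n)%nat) by lia.
    assert (Q := quad_pos n M A z HP H (ex_intro _ k (conj Hk' Hz))).
    assert (0 < quad n A z ^ 2) by (simpl; rewrite Rmult_1_r; apply Rmult_lt_0_compat; auto).
    assert (0 <= z (2*n)%nat ^ 2) by (simpl; rewrite Rmult_1_r; apply Rle_0_sqr). lra.
Qed.

Lemma hp_dq_ex n A k k' z : exists l, has_pderiv (dq n A k) k' z l.
Proof.
  unfold dq. destruct (Nat.ltb k (2*n)); eexists.
  - apply hp_mult. apply hp_const. apply hp_av.
  - apply hp_const.
Qed.

Lemma part1 n M A : sym_mat n M -> posdef_mat n M -> symplectic n M A ->
  (forall w, nonzero_pt n w -> forall k k', (k <= 2 * n)%nat -> (k' <= 2 * n)%nat ->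
      pdiff_at (GammaM n A) k w /\ pdiff_at (pd (GammaM n A) k) k' w).
Proof.
  intros HM HP H w Hw k k' _ _. assert (HA := A_sym n M A HM H).
  split.
  - eexists. apply hp_Gamma; auto. apply (phi_pos n M); auto.
  - assert (L : exists l, has_pderiv (FF n A k) k' w l).
    { destruct (hp_dq_ex n A k k' w) as [l0 Hl0]. eexists. unfold FF, dph.
      apply hp_mult. apply hp_mult. apply hp_const. apply hp_R1; auto. apply (phi_pos n M); auto.
      apply hp_plus; apply hp_mult. apply hp_mult. apply hp_const. apply hp_quad; auto.
      exact Hl0. apply hp_mult. apply hp_const. apply hp_t. apply hp_const. }
    destruct L as [l Hl]. exists l. apply (hp_local n _ (FF n A k)); [exact Hw | | exact Hl].
    intros w' Hw'. apply pd_eq. apply hp_Gamma; auto. apply (phi_pos n M); auto.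
Qed.

Lemma Xop_E n M A i w : sym_mat n M -> posdef_mat n M -> symplectic n M A -> (i < 2*n)%nat ->
  nonzero_pt n w -> Xop n i (GammaM n A) w = EE n A i w.
Proof.
  intros HM HP H Hi Hw. assert (HA := A_sym n M A HM H).
  assert (Hp := phi_pos n M A w HP H Hw).
  unfold Xop. rewrite !(pd_eq _ _ _ _ (hp_Gamma n A _ w HA Hp)).
  unfold FF, EE, dph, dq, dt.
  destruct (Nat.ltb_spec i (2*n)); [|lia]. destruct (Nat.eqb_spec i (2*n)); [lia|].
  destruct (Nat.ltb_spec (2*n) (2*n)); [lia|]. rewrite Nat.eqb_refl. ring.
Qed.

Lemma pd_XE n M A i j z : sym_mat n M -> posdef_mat n M -> symplectic n M A -> (i < 2*n)%nat ->
  nonzero_pt n z -> pd (Xop n i (GammaM n A)) j z = DE n A i j z.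
Proof.
  intros HM HP H Hi Hz. assert (HA := A_sym n M A HM H).
  apply pd_eq. apply (hp_local n _ (EE n A i)); [exact Hz | | ].
  - intros; apply (Xop_E n M); auto.
  - apply hp_E; auto. apply (phi_pos n M); auto.
Qed.

Lemma rsum2_comb N c1 c2 c3 c4 c5 f1 f2 f3 f4 f5 :
  rsum N (fun i => rsum N (fun j => c1 * f1 i j + c2 * f2 i j + c3 * f3 i j + c4 * f4 i j + c5 * f5 i j))
  = c1 * rsum N (fun i => rsum N (fun j => f1 i j)) + c2 * rsum N (fun i => rsum N (fun j => f2 i j))
  + c3 * rsum N (fun i => rsum N (fun j => f3 i j)) + c4 * rsum N (fun i => rsum N (fun j => f4 i j))
  + c5 * rsum N (fun i => rsum N (fun j => f5 i j)).
Proof.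
  rewrite <- !rsum_scal, <- !rsum_plus. apply rsum_ext; intros.
  rewrite <- !rsum_scal, <- !rsum_plus. reflexivity.
Qed.

Lemma Xop_unf n i f z : Xop n i f z = pd f i z + 2 * Jx n z i * pd f (2*n) z.
Proof. reflexivity. Qed.

Lemma Rpower_m1 x c : 0 < x -> Rpower x c = Rpower x (c - 1) * x.
Proof. intros Hx. rewrite <- (Rpower_1 x) at 3 by auto. rewrite <- Rpower_plus. f_equal. ring. Qed.

Lemma part2 n M A : sym_mat n M -> posdef_mat n M -> symplectic n M A ->
  forall z, nonzero_pt n z -> LM n M (GammaM n A) z = 0.
Proof.
  intros HM HP H z Hz. assert (HA := A_sym n M A HM H).
  assert (Hp := phi_pos n M A z HP H Hz).
  set (p := pex n). set (q := quad n A z). set (t := z (2*n)%nat).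
  set (R2 := Rpower (phiM n A z) (p - 1 - 1)).
  set (ph := phiM n A z).
  unfold LM.
  transitivity (rsum (2*n) (fun i => rsum (2*n) (fun j =>
     (16*p*(p-1)*R2*q^2 + 8*p*R2*ph) * (M i j * av n A z i * av n A z j)
   + (16*p*(p-1)*R2*q*t) * (M i j * av n A z i * Jx n z j)
   + (16*p*(p-1)*R2*q*t) * (M i j * Jx n z i * av n A z j)
   + (16*p*(p-1)*R2*t^2 + 8*p*R2*ph) * (M i j * Jx n z i * Jx n z j)
   + (4*p*R2*ph*q) * (M i j * A i j)))).
  { apply rsum_ext; intros i Hi; apply rsum_ext; intros j Hj.
    unfold D2H. rewrite (Xop_unf n j (Xop n i _)), (Xop_unf n i (Xop n j _)).
    rewrite !(pd_XE n M A) by auto.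
    unfold DE. fold p. fold ph. fold q. fold t.
    rewrite (Rpower_m1 ph (p-1)) by exact Hp. change (Rpower ph (p-1-1)) with R2.
    unfold dph, dq, dt. fold q. fold t.
    destruct (Nat.ltb_spec i (2*n)); [|lia]. destruct (Nat.eqb_spec i (2*n)); [lia|].
    destruct (Nat.ltb_spec j (2*n)); [|lia]. destruct (Nat.eqb_spec j (2*n)); [lia|].
    destruct (Nat.ltb_spec (2*n) (2*n)); [lia|]. rewrite Nat.eqb_refl.
    rewrite (HA j i) by auto. rewrite (J_antisym n j i).
    unfold ph, phiM. fold q. fold t. field. }
  rewrite rsum2_comb. rewrite (S1 n M A z H), (S4b n M A z HM H), (S4a n M A z H), (S3 n M A z H),
    (S2 n M A H HA).
  unfold ph, phiM. fold q. fold t. unfold p, pex, Qdim.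
  rewrite plus_INR. rewrite !mult_INR. simpl (INR 2). clearbody R2 q t. field.
Qed.

Theorem mainTheorem3 (n : nat) (M Minv : nat -> nat -> R)
  (Hsym : sym_mat n M) (Hpos : posdef_mat n M) (Hsp : symplectic n M Minv) :
  (forall w, nonzero_pt n w -> forall k k', (k <= 2 * n)%nat -> (k' <= 2 * n)%nat ->
      pdiff_at (GammaM n Minv) k w /\ pdiff_at (pd (GammaM n Minv) k) k' w) /\
  (forall z, nonzero_pt n z -> LM n M (GammaM n Minv) z = 0).
Proof.
  split. exact (part1 n M Minv Hsym Hpos Hsp). exact (part2 n M Minv Hsym Hpos Hsp).
Qed.
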